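(* Let $J_1$ be the graph with vertex set $\{a,b,c,d,e\}$ and edge set $\{ab,ac,bc,ae,be,cd,de,ad\}$, and let $J_2$ be the graph with the same vertex set and edge set $\{ab,ac,bc,ae,be,cd,de,bd\}$. Let $G$ be any graph obtained by taking six graphs $Q_1,\dots,Q_6$, each isomorphic to $J_1$ or to $J_2$ (the choice may differ for different $i$), pairwise vertex-disjoint, and identifying the copies of the edge $ab$ (vertex $a$ of each copy identified to a single vertex $a$, vertex $b$ of each copy identified to a single vertex $b$), the remaining vertices staying distinct. Then $G$ is not $3$-choosable.
   Context: A graph $G$ is $k$-choosable if for every assignment $L$ of a set $L(v)$ of $k$ colours to each vertex $v$, there is a proper colouring $\phi$ of $G$ with $\phi(v)\in L(v)$ for all $v$. In the paper, the edge $ab$ of $J_1$, $J_2$ and of $G$ is called the handle; the class of all graphs $G$ so obtained is denoted $\mathcal{J}$. *)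

(* Defs.v *)
From mathcomp Require Import all_boot.
Set Implicit Arguments. Unset Strict Implicit. Unset Printing Implicit Defensive.

Definition choosable (V : finType) (adj : rel V) (k : nat) : Prop :=
  forall L : V -> seq nat, (forall v, uniq (L v) /\ size (L v) = k) ->
  exists phi : V -> nat, (forall v, phi v \in L v) /\
                         (forall u v, adj u v -> phi u != phi v).

(* Vertices of J1/J2: 'I_5 with a=0, b=1, c=2, d=3, e=4. *)
Definition J1_edges : seq (nat * nat) :=
  [:: (0,1); (0,2); (1,2); (0,4); (1,4); (2,3); (3,4); (0,3)].
Definition J2_edges : seq (nat * nat) :=
  [:: (0,1); (0,2); (1,2); (0,4); (1,4); (2,3); (3,4); (1,3)].

Definition Jadj (es : seq (nat * nat)) : rel 'I_5 :=
  fun x y => ((nat_of_ord x, nat_of_ord y) \in es) || ((nat_of_ord y, nat_of_ord x) \in es).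

(* Vertices of G: inl false = a, inl true = b (the handle),
   inr (i, j) = the j-th non-handle vertex (c, d, e for j = 0, 1, 2) of copy Q_i. *)
Definition GV : finType := (bool + 'I_6 * 'I_3)%type.

Definition emb (i : 'I_6) (x : 'I_5) : GV :=
  if (x < 2)%N then inl (x == 1 :> nat) else inr (i, inord (x - 2)).

Definition Gadj (t : 'I_6 -> bool) : rel GV :=
  fun u v => [exists i : 'I_6, exists x : 'I_5, exists y : 'I_5,
    [&& Jadj (if t i then J1_edges else J2_edges) x y, emb i x == u & emb i y == v]].

(* Main.v *)
Require Import Defs.
From mathcomp Require Import all_boot.

Definition pr (i : 'I_6) : nat * nat :=
  nth (0,0) [:: (1,2); (2,1); (1,3); (3,1); (2,3); (3,2)] i.

Definition Lc (b : bool) (p : nat * nat) (j : 'I_3) : seq nat :=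
  if val j == 0 then [:: p.1; p.2; 4]
  else if val j == 1 then [:: if b then p.1 else p.2; 4; 5]
  else [:: p.1; p.2; 5].

Definition LL (t : 'I_6 -> bool) (v : GV) : seq nat :=
  match v with inl _ => [:: 1; 2; 3] | inr (i, j) => Lc (t i) (pr i) j end.

Lemma LL_ok b i j : uniq (Lc b (pr i) j) && (size (Lc b (pr i) j) == 3).
Proof.
move: b i j => b [[|[|[|[|[|[|//]]]]]] ?] [[|[|[|//]]] ?]; case: b; by vm_compute.
Qed.

Lemma adjE t i (x y : 'I_5) :
  Jadj (if t i then J1_edges else J2_edges) x y -> Gadj t (emb i x) (emb i y).
Proof.
move=> H; apply/existsP; exists i; apply/existsP; exists x; apply/existsP; exists y.
by rewrite H !eqxx.
Qed.

Lemma embc i : emb i (inord 2) = inr (i, ord0).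
Proof. by rewrite /emb inordK //=; congr (inr (_, _)); apply/val_inj; rewrite /= inordK. Qed.
Lemma embd i : emb i (inord 3) = inr (i, inord 1).
Proof. by rewrite /emb inordK. Qed.
Lemma embe i : emb i (inord 4) = inr (i, inord 2).
Proof. by rewrite /emb inordK. Qed.
Lemma emba i : emb i (inord 0) = inl false.
Proof. by rewrite /emb inordK. Qed.
Lemma embb i : emb i (inord 1) = inl true.
Proof. by rewrite /emb inordK. Qed.

Lemma block t (phi : GV -> nat) i :
  (forall v, phi v \in LL t v) -> (forall u v, Gadj t u v -> phi u != phi v) ->
  phi (inl false) = (pr i).1 -> phi (inl true) = (pr i).2 -> False.
Proof.
move=> Hm Ha ea eb.
have A x y : Jadj (if t i then J1_edges else J2_edges) (inord x) (inord y) ->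
   phi (emb i (inord x)) != phi (emb i (inord y)).
  by move=> H; apply: Ha; apply: adjE.
have Jc : forall x y, (x < 5)%N -> (y < 5)%N -> 
   Jadj (if t i then J1_edges else J2_edges) (inord x) (inord y) =
   ((x, y) \in (if t i then J1_edges else J2_edges)) ||
   ((y, x) \in (if t i then J1_edges else J2_edges)).
  by move=> x y hx hy; rewrite /Jadj !inordK.
have [ac bc ae be] :
  [/\ phi (inl false) != phi (inr (i, ord0)), phi (inl true) != phi (inr (i, ord0)),
      phi (inl false) != phi (inr (i, inord 2)) & phi (inl true) != phi (inr (i, inord 2))].
  rewrite -(embc i) -(embe i) -(emba i) -(embb i).
  by split; apply: A; rewrite Jc //; case: (t i).
have [cd de] :
  phi (inr (i, ord0)) != phi (inr (i, inord 1)) /\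
      phi (inr (i, inord 1)) != phi (inr (i, inord 2)).
  rewrite -(embc i) -(embd i) -(embe i).
  by split; apply: A; rewrite Jc //; case: (t i).
have hc := Hm (inr (i, ord0)); have hd := Hm (inr (i, inord 1));
have he := Hm (inr (i, inord 2)).
rewrite /= /Lc /= !inordK // /= !inE in hc hd he.
rewrite ea eb in ac bc ae be.
have c4 : phi (inr (i, ord0)) = 4.
  by case/or3P: hc => /eqP // E; rewrite E eqxx in ac bc.
have e5 : phi (inr (i, inord 2)) = 5.
  by case/or3P: he => /eqP // E; rewrite E eqxx in ae be.
rewrite c4 in cd; rewrite e5 in de.
case: (boolP (t i)) => ti; [rewrite ti in hd|rewrite (negbTE ti) in hd].
- have : phi (inl false) != phi (inr (i, inord 1)).
    by rewrite -(emba i) -(embd i); apply: A; rewrite Jc // ti.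
  by rewrite ea; case/or3P: hd => /eqP E; rewrite E eqxx in cd de *.
- have : phi (inl true) != phi (inr (i, inord 1)).
    by rewrite -(embb i) -(embd i); apply: A; rewrite Jc // (negbTE ti).
  by rewrite eb; case/or3P: hd => /eqP E; rewrite E eqxx in cd de *.
Qed.

Theorem lemma2 (t : 'I_6 -> bool) : ~ choosable (Gadj t) 3.
Proof.
move=> H.
have [|phi [Hm Ha]] := H (LL t).
  case=> [b|[i j]] /=; first by [].
  have /andP [u /eqP s] := LL_ok (t i) i j.
  by [].
have ab : phi (inl false) != phi (inl true).
  by rewrite -(emba ord0) -(embb ord0); apply: Ha; apply: adjE; rewrite /Jadj !inordK //; case: (t _).
have ha := Hm (inl false); have hb := Hm (inl true).
rewrite /= !inE in ha hb.
case/or3P: ha => /eqP Ea; case/or3P: hb => /eqP Eb; rewrite Ea Eb in ab => //.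
- exact: (@block t phi (Ordinal (isT : (0 < 6)%N)) Hm Ha Ea Eb).
- exact: (@block t phi (Ordinal (isT : (2 < 6)%N)) Hm Ha Ea Eb).
- exact: (@block t phi (Ordinal (isT : (1 < 6)%N)) Hm Ha Ea Eb).
- exact: (@block t phi (Ordinal (isT : (4 < 6)%N)) Hm Ha Ea Eb).
- exact: (@block t phi (Ordinal (isT : (3 < 6)%N)) Hm Ha Ea Eb).
- exact: (@block t phi (Ordinal (isT : (5 < 6)%N)) Hm Ha Ea Eb).
Qed.
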